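(* Let $\kappa>0$ be a cardinal, $K$ a field, and $R$ the $K$-algebra $K^\kappa$ (direct product of $\kappa$ copies of $K$). If $\kappa$ is finite, then $R$ has a strong multiplicative basis; if $\kappa$ is infinite, then $R$ has no bounded basis.
   Context: Let $B$ be a $K$-linear basis of a $K$-algebra $R$. For $r\in R$ write $r=\sum_{b\in B} b k_b$ and let $\mathrm{supp}(r)=\{b\mid k_b\neq 0\}$, $\mathrm{cs}(r)=|\mathrm{supp}(r)|$. For $1\le k<\omega$, $B$ is $k$-bounded if $\mathrm{cs}(bb')\le k$ for all $b,b'\in B$; $B$ is bounded if it is $k$-bounded for some $1 \le k<\omega$. $B$ is a strong multiplicative basis if $bb'\in B$ for all $b,b'\in B$. *)

(* Defs.v *)
(* The K-algebra K^kappa is modelled as the type of all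
   functions I -> K (pointwise operations), where I is a type of cardinality
   kappa. *)
From mathcomp Require Import all_boot all_order all_algebra.
Set Implicit Arguments. Unset Strict Implicit. Unset Printing Implicit Defensive.
Import GRing.Theory.
Local Open Scope ring_scope.

Section Defs.
Variables (K : fieldType) (I : Type).

Definition fmul (f g : I -> K) : I -> K := fun x => f x * g x.

Definition lincomb (n : nat) (c : nat -> K) (s : nat -> I -> K) : I -> K :=
  fun x => \sum_(i < n) c i * s i x.

Definition distinct_in (B : (I -> K) -> Prop) (n : nat) (s : nat -> I -> K) :=
  (forall i, (i < n)%N -> B (s i)) /\
  (forall i j, (i < n)%N -> (j < n)%N -> s i = s j -> i = j).

Definition lin_indep (B : (I -> K) -> Prop) :=
  forall n c s, distinct_in B n s -> lincomb n c s = (fun _ => 0) ->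
  forall i, (i < n)%N -> c i = 0.
Definition spanning (B : (I -> K) -> Prop) :=
  forall r, exists n c s, distinct_in B n s /\ r = lincomb n c s.
Definition is_basis (B : (I -> K) -> Prop) := lin_indep B /\ spanning B.

(* r = sum_{i<n} c_i s_i is the expansion of r in B: the s_i are distinct
   elements of B and the k_b = c_i are nonzero, so supp(r) = {s_0..s_{n-1}} *)
Definition expansion (B : (I -> K) -> Prop) (r : I -> K) n c s :=
  distinct_in B n s /\ (forall i, (i < n)%N -> c i != 0) /\ r = lincomb n c s.

Definition cs_le (B : (I -> K) -> Prop) (r : I -> K) (k : nat) :=
  forall n c s, expansion B r n c s -> (n <= k)%N.

Definition k_bounded (B : (I -> K) -> Prop) (k : nat) :=
  forall b b', B b -> B b' -> cs_le B (fmul b b') k.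
Definition bounded_basis (B : (I -> K) -> Prop) :=
  exists k, (1 <= k)%N /\ k_bounded B k.
Definition strong_multiplicative (B : (I -> K) -> Prop) :=
  forall b b', B b -> B b' -> B (fmul b b').

Definition finite_type := exists n (f : 'I_n -> I), forall x, exists i, f i = x.
End Defs.

(* Main.v *)
From HB Require Import structures.
Require Import Defs.
From mathcomp Require Import all_boot all_order all_algebra.
From mathcomp Require Import boolp.
From Stdlib Require Import ClassicalEpsilon.
From mathcomp Require Import zify.
Set Implicit Arguments. Unset Strict Implicit. Unset Printing Implicit Defensive.
Import GRing.Theory.
Local Open Scope ring_scope.

Definition cI (T : Type) : Type := T.
HB.instance Definition _ (T : Type) := gen_eqMixin (cI T).

Definition eqc (T : Type) (a b : T) : bool := (a : cI T) == (b : cI T).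
Lemma eqcP (T : Type) (a b : T) : reflect (a = b) (eqc a b).
Proof. exact: (@eqP (cI T) a b). Qed.

Section Rep.
Variables (K : fieldType) (I : Type).
Local Notation F := (I -> K).
Implicit Types (l : seq (K * F)) (B : F -> Prop).

Definition vall l : F := fun x => \sum_(p <- l) p.1 * p.2 x.
Definition inB B l := forall p, p \in l -> B p.2.
Definition coef l (b : F) : K := \sum_(p <- l | p.2 == b) p.1.

Lemma inB_cat B l1 l2 : inB B l1 -> inB B l2 -> inB B (l1 ++ l2).
Proof. by move=> h1 h2 p; rewrite mem_cat => /orP[/h1|/h2]. Qed.

Lemma vall_cat l1 l2 : vall (l1 ++ l2) = fun x => vall l1 x + vall l2 x.
Proof. by apply: funext => x; rewrite /vall big_cat. Qed.

Lemma sum_pred1_uniq (T : eqType) (u : seq T) (b : T) (G : T -> K) :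
  uniq u -> b \in u -> \sum_(c <- u | c == b) G c = G b.
Proof.
move=> uu bu; rewrite -big_filter.
have -> : [seq c <- u | c == b] = [:: b] by rewrite -(filter_pred1_uniq uu bu).
by rewrite big_seq1.
Qed.

Lemma coef_cons p l b : coef (p :: l) b = (if b == p.2 then p.1 else 0) + coef l b.
Proof. by rewrite /coef big_cons eq_sym; case: eqP; rewrite ?add0r. Qed.

Lemma coef_nil b : coef [::] b = 0.
Proof. by rewrite /coef big_nil. Qed.

Lemma group_val l (u : seq F) : uniq u -> {subset map snd l <= u} ->
  forall x, vall l x = \sum_(b <- u) coef l b * b x.
Proof.
move=> uu; elim: l => [|p l IH] sub x.
  by rewrite /vall big_nil big1 // => b _; rewrite coef_nil mul0r.
rewrite /vall big_cons.
have sub' : {subset map snd l <= u} by move=> y yl; apply: sub; rewrite /= inE yl orbT.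
have pu : p.2 \in u by apply: sub; rewrite /= inE eqxx.
rewrite [X in _ + X = _](IH sub' x).
under [RHS]eq_bigr => b _ do rewrite coef_cons mulrDl.
rewrite big_split /=; congr (_ + _).
rewrite -(sum_pred1_uniq (fun b => p.1 * b x) uu pu) big_mkcond /=.
by apply: eq_bigr => b _; case: eqP; rewrite ?mul0r.
Qed.
Lemma coef0_notin l b : b \notin map snd l -> coef l b = 0.
Proof.
move=> bn; rewrite /coef big_seq_cond big1 // => p /andP[pl /eqP pb].
by move: bn; rewrite -pb (map_f snd pl).
Qed.

Lemma vall_lincomb n c s : lincomb n c s = vall [seq (c i, s i) | i <- iota 0 n].
Proof.
apply: funext => x; rewrite /lincomb /vall big_map.
by rewrite -(big_mkord xpredT (fun i => c i * s i x)) /index_iota subn0.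
Qed.

Lemma indep_coef B l : lin_indep B -> inB B l -> vall l = (fun _ => 0) ->
  forall b, coef l b = 0.
Proof.
move=> hind hB h0 b.
set u := undup (map snd l).
have uu : uniq u by apply: undup_uniq.
have sub : {subset map snd l <= u} by move=> y; rewrite mem_undup.
have Bu : forall y, y \in u -> B y.
  by move=> y; rewrite mem_undup => /mapP[p pl ->]; apply: hB.
have key := hind (size u) (fun i => coef l (nth (fun _ => 0) u i))
  (fun i => nth (fun _ => 0) u i).
have dist : distinct_in B (size u) (fun i => nth (fun _ => 0) u i).
  split; first by move=> i iu; apply: Bu; apply: mem_nth.
  by move=> i j iu ju /eqP; rewrite nth_uniq // => /eqP.
have lc : lincomb (size u) (fun i => coef l (nth (fun _ => 0) u i))
  (fun i => nth (fun _ => 0) u i) = (fun _ => 0).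
  apply: (etrans _ h0); apply: funext => x; rewrite (group_val uu sub) /lincomb.
  rewrite (big_nth (fun _ => 0)) big_mkord //.
case: (boolP (b \in u)) => bu.
  have := key dist lc (index b u); rewrite index_mem => /(_ bu).
  by rewrite nth_index.
by apply: coef0_notin; apply: contra bu; apply: sub.
Qed.

Definition scl (a : K) l := [seq (a * w.1, w.2) | w <- l].

Lemma vall_scl a l : vall (scl a l) = fun x => a * vall l x.
Proof.
apply: funext => x; rewrite /vall /scl big_map mulr_sumr.
by apply: eq_bigr => w _ /=; rewrite mulrA.
Qed.

Lemma inB_scl B a l : inB B l -> inB B (scl a l).
Proof. by move=> h p; rewrite /scl => /mapP[w wl ->]; apply: (h w wl). Qed.

Lemma size_scl a l : size (scl a l) = size l.
Proof. exact: size_map. Qed.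

Lemma coef_scl a l b : coef (scl a l) b = a * coef l b.
Proof. by rewrite /coef /scl big_map mulr_sumr. Qed.

Lemma rep_exists B : spanning B -> forall g, exists l, inB B l /\ g = vall l.
Proof.
move=> hsp g; have [n [c [s [[hB _] ->]]]] := hsp g.
exists [seq (c i, s i) | i <- iota 0 n]; split; last exact: vall_lincomb.
by move=> p /mapP[i]; rewrite mem_iota add0n => /andP[_ /hB] h ->.
Qed.

Lemma rep_contains B l l' b : lin_indep B -> inB B l -> inB B l' ->
  vall l = vall l' -> coef l' b != 0 -> b \in map snd l.
Proof.
move=> hind hl hl' e nz.
have h0 : vall (l ++ scl (-1) l') = (fun _ => 0).
  by apply: funext => x; rewrite vall_cat vall_scl e mulN1r subrr.
have := indep_coef hind (inB_cat hl (@inB_scl B (-1) l' hl')) h0 b.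
rewrite /coef big_cat /= -/(coef l b) -/(coef (scl (-1) l') b) coef_scl mulN1r.
move/eqP; rewrite subr_eq0 => /eqP ebc.
by apply: contraR nz => /coef0_notin; rewrite -ebc => ->.
Qed.

Lemma short_prod B k u v : spanning B -> k_bounded B k -> B u -> B v ->
  exists l, [/\ inB B l, (size l <= k)%N & fmul u v = vall l].
Proof.
move=> hsp hk Bu Bv.
have [n [c [s [[hB hinj] e]]]] := hsp (fmul u v).
set idx := [seq i <- iota 0 n | c i != 0].
have idxP : forall j, (j < size idx)%N -> (nth 0%N idx j < n)%N /\ c (nth 0%N idx j) != 0.
  move=> j jl; have := mem_nth 0%N jl; rewrite mem_filter mem_iota add0n.
  by case/andP=> -> /andP[].
have uidx : uniq idx by rewrite filter_uniq // iota_uniq.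
exists [seq (c i, s i) | i <- idx]; split.
- move=> p /mapP[i]; rewrite mem_filter mem_iota add0n.
  by case/andP=> _ /andP[_ /hB] h ->.
- rewrite size_map; apply: (hk u v Bu Bv (size idx) (fun j => c (nth 0%N idx j))
     (fun j => s (nth 0%N idx j))).
  split; [split|split].
  + by move=> j /idxP[/hB].
  + move=> i j il jl /hinj.
    have [i1 _] := idxP i il; have [j1 _] := idxP j jl.
    by move=> /(_ i1 j1) /eqP; rewrite nth_uniq // => /eqP.
  + by move=> j /idxP[].
  + rewrite e; apply: funext => x; rewrite /lincomb.
    rewrite -(big_mkord xpredT (fun i => c i * s i x)).
    rewrite -[RHS](big_mkord xpredT (fun j => c (nth 0%N idx j) * s (nth 0%N idx j) x)).
    rewrite -(big_nth 0%N xpredT (fun i => c i * s i x)) /idx big_filter /index_iota subn0.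
    rewrite [RHS]big_mkcond /=; apply: eq_bigr => i _.
    by case: eqP => [->|]; rewrite ?mul0r.
- rewrite e vall_lincomb; apply: funext => x; rewrite /vall !big_map /idx big_filter.
  rewrite [RHS]big_mkcond /=; apply: eq_bigr => i _.
  by case: eqP => [->|]; rewrite ?mul0r.
Qed.

Lemma prod_rep1 B k u l2 : spanning B -> k_bounded B k -> B u -> inB B l2 ->
  exists l, [/\ inB B l, (size l <= k * size l2)%N & fmul u (vall l2) = vall l].
Proof.
move=> hsp hk Bu; elim: l2 => [|q l2 IH] hl2.
  exists [::]; split => //; apply: funext => x.
  by rewrite /fmul /vall !big_nil mulr0.
have hl2' : inB B l2 by move=> p pl; apply: hl2; rewrite inE pl orbT.
have [l' [hl' sl' el']] := IH hl2'.
have Bq : B q.2 by apply: hl2; rewrite inE eqxx.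
have [lq [hlq slq elq]] := short_prod hsp hk Bu Bq.
exists (scl q.1 lq ++ l'); split.
- by apply: inB_cat => //; apply: inB_scl.
- by rewrite size_cat size_scl /= mulnS leq_add.
- apply: funext => x; rewrite vall_cat vall_scl -elq -el' /fmul /vall big_cons.
  by rewrite mulrDr mulrCA.
Qed.

Lemma prod_rep B k l1 l2 : spanning B -> k_bounded B k -> inB B l1 -> inB B l2 ->
  exists l, [/\ inB B l, (size l <= k * size l1 * size l2)%N &
     fmul (vall l1) (vall l2) = vall l].
Proof.
move=> hsp hk; elim: l1 => [|p l1 IH] hl1 hl2.
  exists [::]; split => //; apply: funext => x.
  by rewrite /fmul /vall !big_nil mul0r.
have hl1' : inB B l1 by move=> q ql; apply: hl1; rewrite inE ql orbT.
have [l' [hl' sl' el']] := IH hl1' hl2.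
have Bp : B p.2 by apply: hl1; rewrite inE eqxx.
have [lp [hlp slp elp]] := prod_rep1 hsp hk Bp hl2.
exists (scl p.1 lp ++ l'); split.
- by apply: inB_cat => //; apply: inB_scl.
- by rewrite size_cat size_scl /= mulnS mulnDl leq_add.
- apply: funext => x; rewrite vall_cat vall_scl -elp -el' /fmul /vall big_cons.
  by rewrite mulrDl mulrA.
Qed.

Lemma bigcs B (D : nat) (x : 'I_D -> I) : spanning B -> lin_indep B -> injective x ->
  exists g : F, (forall y, g y != 0 -> exists i, y = x i) /\
    forall l, inB B l -> g = vall l -> (D <= size l)%N.
Proof.
move=> hsp hind xinj.
pose del (i : 'I_D) : F := fun y => if eqc y (x i) then 1 else 0.
have [L hL] : exists L : 'I_D -> seq (K * F), forall i, inB B (L i) /\ del i = vall (L i).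
  apply: (@fin_all_exists _ (fun _ => seq (K * F)) (fun i l => inB B l /\ del i = vall l)) => i; exact: (rep_exists hsp).
set S := undup (flatten [seq map snd (L i) | i <- enum 'I_D]).
have uS : uniq S by apply: undup_uniq.
have subS : forall i, {subset map snd (L i) <= S}.
  move=> i y yi; rewrite mem_undup; apply/flattenP.
  by exists (map snd (L i)) => //; apply/mapP; exists i; rewrite ?mem_enum.
have BS : forall y, y \in S -> B y.
  move=> y; rewrite mem_undup => /flattenP[s /mapP[i _ ->] /mapP[p pl ->]].
  by have [h _] := hL i; apply: h.
pose a i b := coef (L i) b.
have delE : forall i y, del i y = \sum_(b <- S) a i b * b y.
  by move=> i y; have [_ ->] := hL i; apply: group_val.
pose N := size S.
pose A : 'M[K]_(D, N) := \matrix_(i, j) a i (nth (fun _ => 0) S j).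
pose beta (v : 'rV[K]_D) b := \sum_i v 0 i * a i b.
pose gv (v : 'rV[K]_D) : F := fun y => \sum_i v 0 i * del i y.
have gvE : forall v y, gv v y = \sum_(b <- S) beta v b * b y.
  move=> v y; rewrite /gv.
  under eq_bigr => i _ do rewrite delE mulr_sumr.
  rewrite exchange_big /=; apply: eq_bigr => b _.
  by rewrite /beta mulr_suml; apply: eq_bigr => i _; rewrite mulrA.
have vAE : forall v j, (v *m A) 0 j = beta v (nth (fun _ => 0) S j).
  by move=> v j; rewrite !mxE; apply: eq_bigr => i _; rewrite mxE.
have delx : forall i i0, del i (x i0) = if i0 == i then 1 else 0.
  move=> i i0; rewrite /del; case: eqcP => [/xinj ->|ne]; first by rewrite eqxx.
  by case: eqP => // e; case: ne; rewrite e.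
have gvx : forall v i0, gv v (x i0) = v 0 i0.
  move=> v i0; rewrite /gv (bigD1 i0) //= delx eqxx mulr1 big1 ?addr0 //.
  by move=> i /negPf ne; rewrite delx eq_sym ne mulr0.
have hfree : row_free A.
  apply: inj_row_free => v h; apply/rowP => i0; rewrite mxE -gvx gvE.
  rewrite big_seq big1 // => b bS; rewrite -(nth_index (fun _ => 0) bS).
  have iS : (index b S < N)%N by rewrite index_mem.
  by rewrite -[index b S]/(nat_of_ord (Ordinal iS)) -vAE h mxE mul0r.
have hfull : row_full A^T by rewrite /row_full mxrank_tr.
pose f := fullrankfun hfull.
have finj : injective f by apply: fullrankfun_inj.
pose C := rowsub f A^T.
have Cu : C \in unitmx by rewrite -row_free_unit; apply: fullrowsub_free.
pose w : 'cV[K]_D := invmx C *m const_mx 1.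
pose v := w^T.
have beta1 : forall i, beta v (nth (fun _ => 0) S (f i)) = 1.
  move=> i; rewrite -vAE.
  have : (C *m w) i 0 = 1 by rewrite mulmxA mulmxV // mul1mx mxE.
  rewrite !mxE => <-; apply: eq_bigr => l _; rewrite !mxE mulrC.
  by [].
exists (gv v); split.
  move=> y nz; apply: contrapT => hn; move: nz; rewrite /gv big1 ?eqxx // => i _.
  rewrite /del; case: eqcP => [e|]; last by rewrite mulr0.
  by case: hn; exists i.
move=> l hl el.
pose lS := [seq (beta v b, b) | b <- S].
have hlS : inB B lS by move=> p /mapP[b bS ->]; apply: BS.
have elS : vall l = vall lS.
  rewrite -el; apply: funext => y; rewrite gvE /vall big_map //.
have inl : forall i, nth (fun _ => 0) S (f i) \in map snd l.
  move=> i; apply: (rep_contains hind hl hlS elS).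
  rewrite /coef /lS big_map sum_pred1_uniq //; first by rewrite beta1 oner_eq0.
  by apply: mem_nth.
have hinj : injective (fun i => nth (fun _ => 0) S (f i)).
  move=> i i' /eqP; rewrite nth_uniq // => /eqP e; apply: finj; exact: val_inj.
have := uniq_leq_size (s1 := [seq nth (fun _ => 0) S (f i) | i <- enum 'I_D])
  (s2 := map snd l).
rewrite map_inj_uniq // enum_uniq size_map size_enum_ord size_map; apply => //.
by move=> y /mapP[i _ ->].
Qed.

End Rep.
Lemma inj_nat (I : Type) : inhabited I -> ~ finite_type I -> exists e : nat -> I, injective e.
Proof.
move=> [x0] nfin.
have next : forall s : seq (cI I), exists y : I, (y : cI I) \notin s.
  move=> s; apply: contrapT => h; apply: nfin.
  exists (size s), (fun i => nth x0 s i) => y.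
  have ys : (y : cI I) \in s by apply: contrapT => ny; apply: h; exists y; apply/negP.
  have iy : (index (y : cI I) s < size s)%N by rewrite index_mem.
  by exists (Ordinal iy); apply: (@nth_index (cI I)).
pose nx s := proj1_sig (constructive_indefinite_description _ (next s)).
have nxP : forall s, (nx s : cI I) \notin s.
  by move=> s; rewrite /nx; case: constructive_indefinite_description.
pose E n := iter n (fun s => (nx s : cI I) :: s) [::].
pose e n := nx (E n).
have inE' : forall m n, (m < n)%N -> (e m : cI I) \in E n.
  move=> m; elim=> // n IH; rewrite ltnS leq_eqVlt => /orP[/eqP ->|lt].
    by rewrite /= inE eqxx.
  by rewrite /= inE (IH lt) orbT.
exists e => m n emn.
case: (ltngtP m n) => // lt.
  by have := nxP (E n); rewrite -/(e n) -emn inE' .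
by have := nxP (E m); rewrite -/(e m) emn inE'.
Qed.

Lemma part2 (K : fieldType) (I : Type) (hI : inhabited I) :
  ~ finite_type I -> forall B : (I -> K) -> Prop, is_basis B -> ~ bounded_basis B.
Proof.
move=> nfin B [hind hsp] [k [k1 hk]].
have [e einj] := inj_nat hI nfin.
pose pe (n j : nat) := e (pickle (n, j)).
have peinj : forall n j n' j', pe n j = pe n' j' -> n = n' /\ j = j'.
  by move=> n j n' j' /einj /(pcan_inj pickleK) [-> ->].
pose s_ n : I -> K := fun y => if `[< exists j, y = pe n j >] then 1 else 0.
have ls : forall n, sig (fun l => inB B l /\ s_ n = vall l).
  by move=> n; apply: constructive_indefinite_description; apply: rep_exists.
pose LS n := proj1_sig (ls n).
pose Dn n := (n * k * size (LS n)).+1.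
have hg : forall n, sig (fun g : I -> K => (forall y, g y != 0 -> exists i : 'I_(Dn n), y = pe n i) /\
    forall l, inB B l -> g = vall l -> (Dn n <= size l)%N).
  move=> n; apply: constructive_indefinite_description; apply: bigcs => //.
  by move=> i i' /peinj [_ /val_inj].
pose G n := proj1_sig (hg n).
pose pn (y : I) : nat := match pselect (exists nj : nat * nat, y = e (pickle nj)) with
  | left h => (proj1_sig (constructive_indefinite_description _ h)).1
  | right _ => 0%N end.
have pnE : forall n j, pn (pe n j) = n.
  move=> n j; rewrite /pn; case: pselect => [h|[]]; last by exists (n, j).
  case: constructive_indefinite_description => -[n' j'] /= /einj /(pcan_inj pickleK).
  by case.
pose r : I -> K := fun y => G (pn y) y.
have [lr [hlr er]] := rep_exists hsp r.
set m := size lr.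
have key : fmul r (s_ m) = G m.
  apply: funext => y; rewrite /fmul /s_; case: asboolP => [[j ->]|nin].
    by rewrite mulr1 /r pnE.
  rewrite mulr0; apply/esym/eqP; apply: contraT => nz.
  have [i yi] := (proj2_sig (hg m)).1 y nz.
  by case: nin; exists i.
have [hLS eLS] := proj2_sig (ls m).
have [l3 [h3 s3 e3]] := prod_rep hsp hk hlr hLS.
have := (proj2_sig (hg m)).2 l3 h3.
have eG : G m = vall l3 by rewrite -e3 -key er; congr (fmul _ _); exact: eLS.
move=> /(_ eG); rewrite /Dn => h.
have := leq_trans h s3; rewrite -/(LS m) (mulnC k m) ltnn //.
Qed.
Lemma part1 (K : fieldType) (I : Type) (hI : inhabited I) :
  finite_type I -> exists B : (I -> K) -> Prop, is_basis B /\ strong_multiplicative B.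
Proof.
case: hI => x0 [n [f fsurj]].
pose s : seq (cI I) := undup [seq (f i : cI I) | i <- enum 'I_n].
have us : uniq s by apply: undup_uniq.
have ins : forall x : I, (x : cI I) \in s.
  move=> x; have [i <-] := fsurj x; rewrite mem_undup; apply: map_f; rewrite mem_enum.
  by [].
pose m := size s.
pose idx (x : I) := index (x : cI I) s.
have idxm : forall x, (idx x < m)%N by move=> x; rewrite index_mem.
have nthidx : forall x, nth x0 s (idx x) = x by move=> x; apply: (@nth_index (cI I)).
have idxnth : forall i, (i < m)%N -> idx (nth x0 s i) = i.
  by move=> i im; apply: (@index_uniq (cI I)).
pose bk (k : nat) : I -> K := fun x => if (idx x < k)%N then 1 else 0.
pose B (b : I -> K) := exists k, (0 < k <= m)%N /\ b = bk k.
pose kof (b : I -> K) := epsilon (inhabits 0%N) (fun k => (0 < k <= m)%N /\ b = bk k).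
have kofP : forall b, B b -> (0 < kof b <= m)%N /\ b = bk (kof b).
  by move=> b hb; exact: (epsilon_spec (inhabits 0%N) (fun k => (0 < k <= m)%N /\ b = bk k) hb).
have bkE : forall k i, (i < m)%N -> bk k (nth x0 s i) = if (i < k)%N then 1 else 0.
  by move=> k i im; rewrite /bk idxnth.
exists B; split; [split|].
-
  move=> n' c sb [hB hd] h0.
  pose kk i := kof (sb i).
  have kkP : forall i, (i < n')%N -> (0 < kk i <= m)%N /\ sb i = bk (kk i).
    by move=> i il; apply: kofP; apply: hB.
  have kkinj : forall i j, (i < n')%N -> (j < n')%N -> kk i = kk j -> i = j.
    move=> i j il jl e; apply: hd => //.
    by rewrite (kkP i il).2 (kkP j jl).2 e.
  suff : forall d i, (i < n')%N -> (m - kk i < d)%N -> c i = 0.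
    by move=> H i il; apply: (H (m - kk i).+1 i il).
  elim=> // d IH i il hd'.
  have [/andP[k0 km] ei] := kkP i il.
  have pm : ((kk i).-1 < m)%N by rewrite prednK.
  have := congr1 (fun g => g (nth x0 s (kk i).-1)) h0; rewrite /lincomb /=.
  rewrite (bigD1 (Ordinal il)) //= big1 ?addr0.
    by rewrite ei bkE // prednK // leqnn mulr1.
  move=> j ne; have jl := ltn_ord j.
  have [/andP[kj0 kjm] ej] := kkP j jl.
  rewrite ej bkE //; case: ifP => lt; last by rewrite mulr0.
  have neq : kk j != kk i.
    apply/eqP => e; move: ne; rewrite -(inj_eq val_inj) /=.
    by rewrite (kkinj _ _ jl il e) eqxx.
  have lt' : (kk i < kk j)%N.
    by rewrite ltn_neqAle eq_sym neq /= -(prednK k0).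
  rewrite (IH j jl) ?mul0r //.
  by lia.
-
  move=> r.
  pose a i := if (i < m)%N then r (nth x0 s i) else 0.
  exists m, (fun i => a i - a i.+1), (fun i => bk i.+1); split.
    split; first by move=> i im; exists i.+1.
    move=> i j im jm e.
    have h1 := congr1 (fun g => g (nth x0 s i)) e.
    have h2 := congr1 (fun g => g (nth x0 s j)) e.
    have l1 : (i <= j)%N.
      move: h1; rewrite /= !bkE // ltnSn ltnS.
      by case: leqP => // _ /eqP; rewrite oner_eq0.
    have l2 : (j <= i)%N.
      move: h2; rewrite /= !bkE // ltnSn ltnS.
      by case: leqP => // _ /eqP; rewrite eq_sym oner_eq0.
    by apply/eqP; rewrite eqn_leq l1 l2.
  apply: funext => x; rewrite /lincomb.
  rewrite -(big_mkord xpredT (fun i => (a i - a i.+1) * bk i.+1 x)).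
  have px := idxm x.
  rewrite (big_cat_nat (n := idx x)) //= ?(ltnW px) // [X in X + _]big1_seq ?add0r; last first.
    move=> i /andP[_]; rewrite mem_index_iota => /andP[_ ip].
    by rewrite /bk ltnS leqNgt ip mulr0.
  rewrite big_seq (eq_bigr (fun i => - (a i.+1 - a i))); last first.
    move=> i; rewrite mem_index_iota => /andP[pi _].
    by rewrite /bk ltnS pi mulr1 opprB.
  rewrite -big_seq sumrN telescope_sumr ?(ltnW px) // opprB /a ltnn subr0 px.
  by rewrite nthidx.
-
  move=> b b' [j [/andP[j0 jm] ->]] [k [/andP[k0 km] ->]].
  exists (minn j k); split.
    by rewrite leq_min j0 k0 /= (leq_trans (geq_minl _ _)).
  apply: funext => x; rewrite /fmul /bk leq_min.
  by case: (idx x < j)%N; case: (idx x < k)%N; rewrite ?mulr1 ?mulr0.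
Qed.

Local Close Scope ring_scope.
Unset Implicit Arguments.

Theorem theorem5p6 (K : fieldType) (I : Type) (hI : inhabited I) :
  (finite_type I ->
     exists B : (I -> K) -> Prop, is_basis B /\ strong_multiplicative B) /\
  (~ finite_type I ->
     forall B : (I -> K) -> Prop, is_basis B -> ~ bounded_basis B).
Proof.
split; [exact: part1 | exact: part2].
Qed.
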